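(* If $M$ is a perfect matching of an ST graph $G$, then $G$ is isomorphic to $\mathrm{Split}(\mathrm{Join}(G,M))$.
   Context: A digraph $G$ is a finite set $V(G)$ with $E(G)\subseteq V(G)\times V(G)$ (loops allowed). A source has no in-neighbors, a sink has no out-neighbors; $G$ is an ST graph if every vertex is a source or a sink. A matching $M$ is a set of arcs no two of which share an endpoint; $V(M)$ is the set of endpoints of its arcs; $M$ is perfect if $V(M)=V(G)$. For a matching $M$ of $G$, $\mathrm{Join}(G,M)$ is the digraph with a vertex $(v,v)$ for each $v\in V(G)\setminus V(M)$ and a vertex $(v,w)$ for each $v\to w\in M$, where $(v,w)\to(x,y)$ is an arc iff $v\to y\in E(G)$. For a digraph $D$, $\mathrm{Split}(D)$ has a vertex $\mathrm{out}(v)$ for each non-sink $v$ of $D$ and a vertex $\mathrm{in}(w)$ for each non-source $w$ of $D$ (all distinct), with $\mathrm{out}(v)\to\mathrm{in}(w)$ an arc iff $v\to w\in E(D)$, and no other arcs. Isomorphism means a bijection of vertex sets mapping arcs exactly onto arcs. *)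

(* Defs.v *)
(* Digraphs are a finite type V with an arc relation E : rel V
   (loops allowed: E v v may hold). *)
From mathcomp Require Import all_boot.
Set Implicit Arguments. Unset Strict Implicit. Unset Printing Implicit Defensive.

Section Digraph.
Variables (V : finType) (E : rel V).

Definition is_source (v : V) : bool := [forall u, ~~ E u v].
Definition is_sink (v : V) : bool := [forall w, ~~ E v w].

Definition ST_graph : Prop := forall v, is_source v || is_sink v.

Definition arc_ends (a : V * V) : {set V} := [set a.1; a.2].

Definition matching (M : {set V * V}) : Prop :=
  (forall a, a \in M -> E a.1 a.2) /\
  (forall a b, a \in M -> b \in M -> a != b -> [disjoint arc_ends a & arc_ends b]).

Definition VM (M : {set V * V}) : {set V} := \bigcup_(a in M) arc_ends a.

Definition perfect_matching (M : {set V * V}) : Prop :=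
  matching M /\ VM M = [set: V].

(* Join(G, M): vertices (v,v) for v not in V(M), and (v,w) for v->w in M *)
Definition join_vertex (M : {set V * V}) (p : V * V) : bool :=
  (p \in M) || ((p.1 == p.2) && (p.1 \notin VM M)).

Definition Join_type (M : {set V * V}) : finType := {p : V * V | join_vertex M p}.

Definition Join_rel (M : {set V * V}) : rel (Join_type M) :=
  fun p q => E (val p).1 (val q).2.

End Digraph.

Section SplitDef.
Variables (T : finType) (e : rel T).

(* Split(D): out(v) = inl v for non-sink v, in(w) = inr w for non-source w *)
Definition split_vertex (s : T + T) : bool :=
  match s with
  | inl v => ~~ is_sink e v
  | inr w => ~~ is_source e w
  end.

Definition Split_type : finType := {s : T + T | split_vertex s}.

Definition Split_rel : rel Split_type :=
  fun a b => match val a, val b with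
             | inl v, inr w => e v w
             | _, _ => false
             end.
End SplitDef.

Definition isomorphic (T1 T2 : finType) (e1 : rel T1) (e2 : rel T2) : Prop :=
  exists f : T1 -> T2, bijective f /\ forall x y, e1 x y = e2 (f x) (f y).

Arguments Join_type {V} M.
Arguments Join_rel {V} E M.
Arguments Split_type {T} e.
Arguments Split_rel {T} e.
Arguments isomorphic {T1 T2} e1 e2.

(* Main.v *)
Require Import Defs.
From mathcomp Require Import all_boot.

Theorem lemma5 (V : finType) (E : rel V) (M : {set V * V}) :
  ST_graph E -> perfect_matching E M ->
  isomorphic E (Split_rel (Join_rel E M)).
Proof.
move=> ST [[ME Mdis] VMT].
have srcP : forall v w, E v w -> is_source E v.
  move=> v w Evw; case/orP: (ST v) => // /forallP/(_ w); by rewrite Evw.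
have snkP : forall v w, E v w -> is_sink E w.
  move=> v w Evw; case/orP: (ST w) => // /forallP/(_ v); by rewrite Evw.
have noloop : forall v, ~~ E v v.
  move=> v; apply/negP=> Evv; move: (srcP _ _ Evv) => /forallP/(_ v); by rewrite Evv.
have inM : forall p : Join_type M, val p \in M.
  move=> p; case/orP: (valP p) => // /andP[_]; by rewrite VMT inE.
have same : forall a b, a \in M -> b \in M -> forall u, u \in arc_ends a -> u \in arc_ends b -> a = b.
  move=> a b aM bM u ua ub; apply/eqP; apply/negPn/negP=> ne.
  move: (Mdis a b aM bM ne) => /disjointFr/(_ ua); by rewrite ub.
pose g (s : Split_type (Join_rel E M)) : V :=
  match val s with inl p => (val p).1 | inr p => (val p).2 end.
have ginj : injective g.
  move=> s t; rewrite /g => h; apply: val_inj.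
  case: (val s) h => p; case: (val t) => q /= h.
  - congr inl; apply: val_inj; apply: (same _ _ (inM p) (inM q) (val p).1);
      by rewrite !inE ?h eqxx.
  - have pq : val p = val q.
      by apply: (same _ _ (inM p) (inM q) (val p).1); rewrite !inE ?h eqxx ?orbT.
    rewrite pq in h; move: (ME _ (inM q)); rewrite h => Eq; by move: (noloop (val q).2); rewrite Eq.
  - have pq : val p = val q.
      by apply: (same _ _ (inM p) (inM q) (val p).2); rewrite !inE -?h eqxx ?orbT.
    rewrite pq in h; move: (ME _ (inM q)); rewrite -h => Eq; by move: (noloop (val q).2); rewrite Eq.
  - congr inr; apply: val_inj; apply: (same _ _ (inM p) (inM q) (val p).2);
      by rewrite !inE ?h eqxx ?orbT.
have gsurj : forall u, exists s, g s = u.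
  move=> u; have : u \in VM M by rewrite VMT inE.
  case/bigcupP=> a aM ua.
  have ja : join_vertex M a by rewrite /join_vertex aM.
  pose p : Join_type M := Sub a ja.
  have Ea : Join_rel E M p p by rewrite /Join_rel /=; exact: ME.
  move: ua; rewrite !inE => /orP[] /eqP ->.
  - have sv : split_vertex (Join_rel E M) (inl p).
      by rewrite /= /is_sink; apply/forallPn; exists p; rewrite negbK.
    by exists (Sub (inl p) sv).
  - have sv : split_vertex (Join_rel E M) (inr p).
      by rewrite /= /is_source; apply/forallPn; exists p; rewrite negbK.
    by exists (Sub (inr p) sv).
have gE : forall s t, E (g s) (g t) = Split_rel (Join_rel E M) s t.
  move=> s t; rewrite /g /Split_rel.
  case: (val s) => p; case: (val t) => q //=.
  - apply/negbTE; move: (srcP _ _ (ME _ (inM q))) => /forallP; exact.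
  - apply/negbTE; move: (snkP _ _ (ME _ (inM p))) => /forallP; exact.
  - apply/negbTE; move: (snkP _ _ (ME _ (inM p))) => /forallP; exact.
have [f fK] := fin_all_exists gsurj.
exists f; split.
  by exists g => // s; apply: ginj; rewrite fK.
by move=> x y; rewrite -gE !fK.
Qed.
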